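(* Let $k \geq 1$ and $p \geq 2$ be integers. Then for every $\ell = 0, \dots, k-1$, $$\sum_{m=0}^{p-1} \beta_{m,\ell} = p\, \alpha_\ell ,$$ where $\alpha_\ell$ and $\beta_{m,\ell}$ are the coefficients defined in the context below.
   Context: For an integer $j \geq 0$ define the polynomials $$\gamma_j(\xi) = (-1)^j \int_0^{\xi} \binom{-s}{j}\, ds, \qquad \widetilde\gamma_j(\xi) = \frac{d}{d\xi}\gamma_j(\xi) = (-1)^j \binom{-\xi}{j} = \frac{\xi(\xi+1)\cdots(\xi+j-1)}{j!},$$ where $\binom{x}{j} = x(x-1)\cdots(x-j+1)/j!$ for real $x$ (and $\widetilde\gamma_0 \equiv 1$). The coefficients of the classical $k$-step Adams–Bashforth method are $$\alpha_\ell = (-1)^\ell \sum_{i=\ell}^{k-1} \binom{i}{\ell}\, \gamma_i(1), \qquad \ell = 0,\dots,k-1,$$ so that the $k$-step Adams–Bashforth scheme for $y' = By$ reads $y_{n+1} = y_n + \Delta t\, B \sum_{\ell=0}^{k-1}\alpha_\ell y_{n-\ell}$ (e.g. $k=2$: $\alpha = (3/2,-1/2)$; $k=3$: $\alpha=(23/12,-16/12,5/12)$). For $m = 0,\dots,p-1$ and $\ell = 0,\dots,k-1$ the local time-stepping coefficients are $$\beta_{m,\ell} = \sum_{i=0}^{k-1} \alpha_i \sum_{j=\ell}^{k-1} (-1)^\ell \binom{j}{\ell}\, \widetilde\gamma_j\!\left(\frac{m-i}{p}\right).$$ *)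

(* Defs.v *)
From HB Require Import structures.
From mathcomp Require Import all_boot all_order all_algebra.
Set Implicit Arguments. Unset Strict Implicit. Unset Printing Implicit Defensive.
Import Order.TTheory GRing.Theory Num.Theory.
Local Open Scope ring_scope.

Definition binom_poly (j : nat) : {poly rat} :=
  (j`!%:R)^-1 *: \prod_(i < j) ('X - (i%:R)%:P).

Definition prim (p : {poly rat}) : {poly rat} :=
  \poly_(i < (size p).+1) (if i is i'.+1 then p`_i' / i%:R else 0).

Definition gamma (j : nat) (xi : rat) : rat :=
  (-1) ^+ j * (prim (binom_poly j \Po (- 'X))).[xi].

Definition gtilde (j : nat) (xi : rat) : rat :=
  (-1) ^+ j * (binom_poly j).[- xi].

(* Adams--Bashforth coefficients of the k-step method *)
Definition alpha (k l : nat) : rat :=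
  (-1) ^+ l * \sum_(l <= i < k) ('C(i, l))%:R * gamma i 1.

Definition beta (k p m l : nat) : rat :=
  \sum_(i < k) alpha k i *
    \sum_(l <= j < k) (-1) ^+ l * ('C(j, l))%:R *
        gtilde j ((m%:R - i%:R) / p%:R).

(* Main.v *)
Require Import Defs.
From HB Require Import structures.
From mathcomp Require Import all_boot all_order all_algebra.
From mathcomp Require Import ring.
Import Order.TTheory GRing.Theory Num.Theory.
Local Open Scope ring_scope.

Lemma prim_deriv (q : {poly rat}) : (prim q)^`() = q.
Proof.
apply/polyP => i; rewrite coef_deriv coef_poly /=.
case: ifP => [_|/negbT].
  by rewrite -mulr_natr; field; rewrite nat1r pnatr_eq0.
rewrite ltnS -ltnNge => h; rewrite mul0rn nth_default //.
Qed.

Lemma prim_at0 (q : {poly rat}) : (prim q).[0] = 0.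
Proof. by rewrite horner_coef0 coef_poly. Qed.

Lemma deriv0_const {P : {poly rat}} : P^`() = 0 -> P = (P`_0)%:P.
Proof.
move=> h; apply/polyP => i; rewrite coefC; case: i => [//|n] /=.
have := congr1 (fun r : {poly rat} => r`_n) h; rewrite coef_deriv coef0 => /eqP.
by rewrite mulrn_eq0 /= => /eqP.
Qed.

Lemma primE (q F : {poly rat}) x : F^`() = q -> (prim q).[x] = F.[x] - F.[0].
Proof.
move=> hF; have hD : (prim q - F)^`() = 0 by rewrite derivB prim_deriv hF subrr.
have := deriv0_const hD => e.
have e1 := congr1 (fun r : {poly rat} => r.[x]) e.
have e0 := congr1 (fun r : {poly rat} => r.[0]) e.
move: e1 e0 => /=; rewrite !hornerE prim_at0 => e1 e0.
have : (prim q).[x] - F.[x] = 0 - F.[0] by rewrite e1 e0.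
move=> h; rewrite -[LHS](subrK F.[x]) h; ring.
Qed.

Definition I (q : {poly rat}) : rat := (prim q).[1].

Lemma I_add q r : I (q + r) = I q + I r.
Proof.
rewrite /I (primE _ (prim q + prim r) 1); last by rewrite derivD !prim_deriv.
by rewrite !hornerD !prim_at0 addr0.
Qed.

Lemma I_scale c q : I (c *: q) = c * I q.
Proof.
rewrite /I (primE _ (c *: prim q) 1); last by rewrite derivZ !prim_deriv.
rewrite !hornerZ !prim_at0 mulr0; exact: subr0.
Qed.

Lemma I0 : I 0 = 0.
Proof. by rewrite -(scale0r 0) I_scale mul0r. Qed.

Lemma I_sum (T : Type) (s : seq T) (f : T -> {poly rat}) :
  I (\sum_(t <- s) f t) = \sum_(t <- s) I (f t).
Proof. exact: (big_morph I I_add I0). Qed.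

Definition gp (n : nat) : {poly rat} := (-1) ^+ n *: (binom_poly n \Po - 'X).

Lemma gtildeE n x : gtilde n x = (gp n).[x].
Proof. by rewrite /gtilde /gp [RHS]hornerZ horner_comp hornerN hornerX. Qed.

Lemma gammaE n : gamma n 1 = I (gp n).
Proof. by rewrite /gp I_scale. Qed.

Definition rp (n : nat) : {poly rat} := \prod_(i < n) ('X + (i%:R)%:P).

Lemma rp_props n : (size (rp n) <= n.+1)%N /\ (rp n)`_n = 1.
Proof.
elim: n => [|n [hs hc]]; first by rewrite /rp big_ord0 size_poly1 coefC.
rewrite /rp big_ord_recr /= -/(rp n); split.
  apply: leq_trans (size_mul_leq _ _) _; rewrite size_XaddC.
  by rewrite addn2 /= ltnS.
rewrite mulrDr coefD coefMX coefMC /= hc (nth_default _ hs) mul0r addr0 //.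
Qed.

Lemma comp_prod (n : nat) (f : 'I_n -> {poly rat}) (q : {poly rat}) :
  (\prod_(i < n) f i) \Po q = \prod_(i < n) (f i \Po q).
Proof.
elim: n f => [|n IH] f; first by rewrite !big_ord0 comp_polyC.
by rewrite !big_ord_recr /= comp_polyM IH.
Qed.

Lemma sgn2 (n : nat) : (-1) ^+ n * (-1) ^+ n = 1 :> rat.
Proof. by rewrite -exprMn mulrNN mulr1 expr1n. Qed.

Lemma gpE n : gp n = (n`!%:R)^-1 *: rp n.
Proof.
rewrite /gp /binom_poly comp_polyZ comp_prod.
have -> : \prod_(i < n) (('X - (i%:R)%:P) \Po - 'X) = \prod_(i < n) (- ('X + (i%:R)%:P)) :> {poly rat}.
  by apply: eq_bigr => i _; rewrite comp_polyB comp_polyX comp_polyC opprD.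
rewrite prodrN card_ord -/(rp n).
have -> : ((-1) ^+ n * rp n) = ((-1) ^+ n : rat) *: rp n.
  by rewrite -mul_polyC rmorphXn rmorphN1.
by rewrite !scalerA mulrAC sgn2 mul1r.
Qed.

Lemma gp_size n : (size (gp n) <= n.+1)%N.
Proof.
rewrite gpE; apply: leq_trans (size_scale_leq _ _) _; exact: (rp_props n).1.
Qed.

Lemma gp_lead n : (gp n)`_n = (n`!%:R)^-1.
Proof. by rewrite gpE coefZ (rp_props n).2 mulr1. Qed.

Lemma prod_nat (i n : nat) : \prod_(t < n) (i%:R - t%:R) = (i ^_ n)%:R :> rat.
Proof.
elim: n => [|n IH]; first by rewrite big_ord0 ffactn0.
rewrite big_ord_recr /= IH ffactnSr natrM.
case: (leqP n i) => h; first by rewrite natrB.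
by rewrite ffact_small // !mul0r.
Qed.

Lemma binom_eval (i n : nat) : (binom_poly n).[i%:R] = 'C(i, n)%:R.
Proof.
rewrite /binom_poly hornerZ horner_prod.
under eq_bigr do rewrite hornerXsubC.
rewrite prod_nat -bin_ffact natrM mulrC mulrK //.
by rewrite unitfE pnatr_eq0 -lt0n fact_gt0.
Qed.

Lemma gp_eval (i n : nat) : (gp n).[- (i%:R)] = (-1) ^+ n * 'C(i, n)%:R.
Proof. by rewrite /gp hornerZ horner_comp hornerN hornerX opprK binom_eval. Qed.

Lemma sum_widen (a b : nat) (F : nat -> rat) : (a <= b)%N ->
  (forall i, (a <= i < b)%N -> F i = 0) ->
  \sum_(0 <= i < b) F i = \sum_(0 <= i < a) F i.
Proof.
move=> hab h; rewrite (big_cat_nat (n:=a)) //=.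
rewrite [X in _ + X]big1_seq ?addr0 // => i /andP[_]; rewrite mem_index_iota; exact: h.
Qed.

Lemma coefXD1 (i n : nat) : ((('X + 1 : {poly rat})) ^+ i)`_n = 'C(i, n)%:R.
Proof.
elim: i n => [|i IH] n; first by case: n => [|n]; rewrite expr0 coefC.
rewrite exprS mulrDl mul1r coefD coefXM !IH.
case: n => [|n] /=; first by rewrite add0r !bin0.
by rewrite binS natrD addrC.
Qed.

Lemma sgnZ (m : nat) (p : {poly rat}) : (-1) ^+ m * p = ((-1) ^+ m : rat) *: p.
Proof. by rewrite -mul_polyC rmorphXn rmorphN1. Qed.

Lemma inv_sum (t n : nat) :
  \sum_(0 <= i < t.+1) (-1) ^+ i * 'C(t, i)%:R * 'C(i, n)%:R = (-1) ^+ n * (t == n)%:R :> rat.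
Proof.
have E : (- ('X : {poly rat})) ^+ t = \sum_(i < t.+1) (- ('X + 1)) ^+ i *+ 'C(t, i).
  by rewrite -exprD1n opprD subrK.
have e := congr1 (fun r : {poly rat} => r`_n) E.
move: e; rewrite /= (exprNn (R := {poly rat})) sgnZ coefZ coefXn coef_sum => e.
have -> : (-1) ^+ n * (t == n)%:R = (-1) ^+ t * (n == t)%:R :> rat.
  by rewrite eq_sym; case: eqP => [->|_]; rewrite ?mulr0.
rewrite e big_mkord; apply: eq_bigr => i _.
rewrite coefMn (exprNn (R := {poly rat})) sgnZ coefZ coefXD1 -mulr_natr; ring.
Qed.

Definition L (k : nat) (q : {poly rat}) : rat := \sum_(i < k) alpha k i * q.[- (i%:R)].

Lemma alpha_wide k i : alpha k i = (-1) ^+ i * \sum_(0 <= t < k) 'C(t, i)%:R * gamma t 1.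
Proof.
rewrite /alpha; congr (_ * _); symmetry.
case: (leqP i k) => hik.
  rewrite (big_cat_nat (n:=i)) //= big1_seq ?add0r // => t /andP[_].
  by rewrite mem_index_iota => /andP[_ h]; rewrite bin_small // mul0r.
rewrite [RHS]big_geq ?(ltnW hik) // big1_seq // => t /andP[_].
rewrite mem_index_iota => /andP[_ h]; rewrite bin_small ?mul0r //.
exact: ltn_trans h hik.
Qed.

Lemma L_gp k n : (n < k)%N -> L k (gp n) = gamma n 1.
Proof.
move=> hn; rewrite /L.
under eq_bigr => i _ do rewrite gp_eval alpha_wide.
rewrite -(big_mkord xpredT (fun i => ((-1) ^+ i * \sum_(0 <= t < k) 'C(t, i)%:R * gamma t 1) *
   ((-1) ^+ n * 'C(i, n)%:R))).
transitivity (\sum_(0 <= i < k) \sum_(0 <= t < k)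
   gamma t 1 * ((-1) ^+ n * ((-1) ^+ i * 'C(t, i)%:R * 'C(i, n)%:R))).
  by apply: eq_bigr => i _; rewrite mulr_sumr mulr_suml; apply: eq_bigr => t _; ring.
rewrite exchange_big /=.
transitivity (\sum_(0 <= t < k) gamma t 1 * (t == n)%:R).
  apply: eq_big_nat => t /andP[_ ht].
  rewrite -mulr_sumr; congr (_ * _); rewrite -mulr_sumr.
  rewrite (sum_widen t.+1) // ?inv_sum ?mulrA ?sgn2 ?mul1r //.
  by move=> i /andP[hi _]; rewrite bin_small // mulr0 mul0r.
rewrite (bigD1_seq n) /= ?mem_index_iota ?iota_uniq // eqxx mulr1 big1 ?addr0 //.
by move=> t /negbTE ->; rewrite mulr0.
Qed.

Lemma L_add k (q r : {poly rat}) : L k (q + r) = L k q + L k r.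
Proof. by rewrite /L -big_split; apply: eq_bigr => i _; rewrite hornerD mulrDr. Qed.

Lemma L_scale k c (q : {poly rat}) : L k (c *: q) = c * L k q.
Proof. by rewrite /L mulr_sumr; apply: eq_bigr => i _; rewrite hornerZ; ring. Qed.

Lemma L0 k : L k 0 = 0.
Proof. by rewrite /L big1 // => i _; rewrite horner0 mulr0. Qed.

Lemma exactness k (q : {poly rat}) : (size q <= k)%N -> L k q = I q.
Proof.
suff H : forall n, (n <= k)%N -> forall q : {poly rat}, (size q <= n)%N -> L k q = I q.
  by move=> hq; apply: (H k).
elim=> [|n IH] hn q0 hq.
  by move: hq; rewrite leqn0 size_poly_eq0 => /eqP ->; rewrite L0 I0.
set c := q0`_n * (n`!)%:R.
have hr : (size (q0 - c *: gp n)%R <= n)%N.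
  apply/leq_sizeP => j; rewrite coefB coefZ leq_eqVlt => /orP[/eqP <-|hj].
    rewrite gp_lead /c mulrK ?subrr //.
    by rewrite unitfE pnatr_eq0 -lt0n fact_gt0.
  have /leq_sizeP hq' := hq; have /leq_sizeP hg := gp_size n.
  by rewrite hq' // hg // mulr0 subrr.
have -> : q0 = (q0 - c *: gp n) + c *: gp n by rewrite subrK.
by rewrite L_add I_add L_scale I_scale IH ?(ltnW hn) // L_gp // gammaE.
Qed.

Definition sm (p m : nat) : {poly rat} := ('X + (m%:R)%:P) * ((p%:R)^-1)%:P.

Definition Q (p j : nat) : {poly rat} := \sum_(0 <= m < p) (gp j \Po sm p m).

Lemma Q_eval p j (i : nat) :
  (Q p j).[- (i%:R)] = \sum_(0 <= m < p) gtilde j ((m%:R - i%:R) / p%:R).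
Proof.
rewrite /Q horner_sum; apply: eq_bigr => m _.
rewrite gtildeE horner_comp /sm hornerM hornerD hornerX !hornerC.
by rewrite (addrC (- _)).
Qed.

Lemma sm_size p m : (size (sm p m) <= 2)%N.
Proof.
rewrite /sm; apply: leq_trans (size_mul_leq _ _) _.
rewrite size_XaddC; have := size_polyC_leq1 ((p%:R)^-1 : rat).
case: (size _) => [|[|s]] //.
Qed.

Lemma Q_size p j : (size (Q p j) <= j.+1)%N.
Proof.
apply/leq_sizeP => t ht; rewrite /Q coef_sum big1 // => m _.
have hs : (size (gp j \Po sm p m) <= j.+1)%N.
  apply: leq_trans (size_comp_poly_leq _ _) _.
  have h1 := gp_size j; have h2 := sm_size p m.
  rewrite ltnS; apply: leq_trans (leq_mul (leqnn _) (_ : (size (sm p m)).-1 <= 1)%N) _.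
    by case: (size (sm p m)) h2 => [|[|[|]]].
  by rewrite muln1 -ltnS; case: (size (gp j)) h1.
by have /leq_sizeP := hs; apply.
Qed.

Lemma I_comp (p m : nat) (g : {poly rat}) : p != 0%N ->
  I (g \Po sm p m) = p%:R * ((prim g).[(1 + m%:R) / p%:R] - (prim g).[m%:R / p%:R]).
Proof.
move=> hp; have hp' : (p%:R : rat) != 0 by rewrite pnatr_eq0.
rewrite /I (primE _ (p%:R *: (prim g \Po sm p m)) 1).
  by rewrite !hornerZ !horner_comp /sm !hornerM !hornerD !hornerX !hornerC add0r mulrBr.
rewrite derivZ deriv_comp prim_deriv /sm derivM derivD derivX !derivC addr0 mulr0 addr0 mul1r.
by rewrite scalerAr scale_polyC mulfV // polyC1 mulr1.
Qed.

Lemma I_Q (p j : nat) : p != 0%N -> I (Q p j) = p%:R * gamma j 1.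
Proof.
move=> hp; rewrite /Q I_sum.
under eq_bigr do rewrite I_comp //.
rewrite -mulr_sumr.
under eq_bigr do rewrite nat1r.
rewrite (telescope_sumr (fun m => (prim (gp j)).[m%:R / p%:R])) // divff ?pnatr_eq0 //.
by rewrite mul0r prim_at0 subr0 gammaE.
Qed.

Theorem mainTheorem1 (k p : nat) (hk : (1 <= k)%N) (hp : (2 <= p)%N)
  (l : nat) (hl : (l < k)%N) :
  \sum_(0 <= m < p) beta k p m l = p%:R * alpha k l.
Proof.
have hp0 : p != 0%N by rewrite -lt0n; apply: leq_trans hp.
rewrite /beta.
transitivity (\sum_(l <= j < k) (-1) ^+ l * 'C(j, l)%:R * L k (Q p j)).
  rewrite exchange_big /=.
  transitivity (\sum_(i < k) alpha k i *
     \sum_(l <= j < k) (-1) ^+ l * 'C(j, l)%:R * (Q p j).[- (i%:R)]).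
    apply: eq_bigr => i _; rewrite -mulr_sumr; congr (_ * _).
    rewrite exchange_big /=; apply: eq_bigr => j _.
    by rewrite Q_eval -mulr_sumr.
  rewrite /L; under eq_bigr do rewrite mulr_sumr.
  rewrite exchange_big /=; apply: eq_bigr => j _.
  by rewrite mulr_sumr; apply: eq_bigr => i _; ring.
rewrite /alpha !mulr_sumr; apply: eq_big_nat => j /andP[_ hj].
rewrite exactness ?I_Q //; first ring.
exact: leq_trans (Q_size p j) hj.
Qed.
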